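(* Let $\mathfrak g$ be a Lie algebra, $(\mathfrak k,\pi)$ a $\mathfrak g$-Lie algebra (write $\xi\cdot x=\pi(\xi)x$), $r_\pm:\mathfrak k\to\mathfrak g$ linear maps, $\lambda\in\mathbb R$, $r=(r_++r_-)/2$, $\beta=(r_+-r_-)/2$. Suppose $\beta$ is antisymmetric of mass $\nu\neq0$, $\mathfrak g$-invariant of mass $\kappa\neq0$ and equivalent of mass $\lambda$. Then: (i) for each sign, the bracket $[x,y]_\pm:=\lambda[x,y]_{\mathfrak k}\pm2\beta(x)\cdot y$ is a Lie bracket on the vector space $\mathfrak k$, and with it $(\mathfrak k_\pm,\pi)$ is a $\mathfrak g$-Lie algebra; (ii) for each sign, $r$ is an extended $\mathcal O$-operator of weight $\lambda$ with extension $\beta$ of mass $(\nu,-1,\pm\lambda)$ (for $\nu\neq 0$) if and only if $r_\pm:\mathfrak k_\mp\to\mathfrak g$ is an $\mathcal O$-operator of weight $1$, where $\mathfrak k_\mp$ carries the bracket $[\,,\,]_\mp$.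
   Context: All spaces are finite-dimensional real. A $\mathfrak g$-Lie algebra $(\mathfrak k,\pi)$ is a Lie algebra $(\mathfrak k,[\,,\,]_{\mathfrak k})$ with a Lie algebra homomorphism $\pi:\mathfrak g\to\mathrm{Der}(\mathfrak k)$. For constants $\nu,\kappa,\mu$, a linear map $\beta:\mathfrak k\to\mathfrak g$ is: antisymmetric of mass $\nu$ if $\nu(\beta(x)\cdot y+\beta(y)\cdot x)=0$; $\mathfrak g$-invariant of mass $\kappa$ if $\kappa\beta(\xi\cdot x)=\kappa[\xi,\beta(x)]_{\mathfrak g}$; equivalent of mass $\mu$ if $\mu\beta([x,y]_{\mathfrak k})\cdot z=\mu[\beta(x)\cdot y,z]_{\mathfrak k}$ (for all $x,y,z\in\mathfrak k,\xi\in\mathfrak g$). Given such $\beta$, $r:\mathfrak k\to\mathfrak g$ is an extended $\mathcal O$-operator of weight $\lambda$ with extension $\beta$ of mass $(\nu,\kappa,\mu)$ if $[r(x),r(y)]_{\mathfrak g}-r(r(x)\cdot y-r(y)\cdot x+\lambda[x,y]_{\mathfrak k})=\kappa[\beta(x),\beta(y)]_{\mathfrak g}+\mu\beta([x,y]_{\mathfrak k})$ for all $x,y$. If $(\mathfrak k,\pi)$ is a $\mathfrak g$-Lie algebra with bracket $[\,,\,]$, a linear map $T:\mathfrak k\to\mathfrak g$ is an $\mathcal O$-operator of weight $\lambda$ if $[T(x),T(y)]_{\mathfrak g}=T(T(x)\cdot y-T(y)\cdot x+\lambda[x,y])$ for all $x,y$. *)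

(* Defs.v *)
From HB Require Import structures.
From mathcomp Require Import all_boot all_order all_algebra.
Set Implicit Arguments. Unset Strict Implicit. Unset Printing Implicit Defensive.
Import Order.TTheory GRing.Theory Num.Theory.
Local Open Scope ring_scope.

Section LieDefs.
Variable R : realFieldType.

Definition is_lie_bracket (V : lmodType R) (br : V -> V -> V) : Prop :=
  [/\ (forall (a : R) (x y z : V), br (a *: x + y) z = a *: br x z + br y z),
      (forall (a : R) (x y z : V), br z (a *: x + y) = a *: br z x + br z y),
      (forall x : V, br x x = 0) &
      (forall x y z : V, br x (br y z) + br y (br z x) + br z (br x y) = 0)].

Definition is_g_lie_algebra (g k : lmodType R) (brg : g -> g -> g)
  (brk : k -> k -> k) (pi : g -> k -> k) : Prop :=
  [/\ is_lie_bracket brg, is_lie_bracket brk,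
      ((forall (a : R) (xi eta : g) (x : k), pi (a *: xi + eta) x = a *: pi xi x + pi eta x) /\
       (forall (xi : g) (a : R) (x y : k), pi xi (a *: x + y) = a *: pi xi x + pi xi y)),
      (forall (xi : g) (x y : k), pi xi (brk x y) = brk (pi xi x) y + brk x (pi xi y)) &
      (forall (xi eta : g) (x : k), pi (brg xi eta) x = pi xi (pi eta x) - pi eta (pi xi x))].

Definition antisym_mass (g k : lmodType R) (pi : g -> k -> k) (beta : k -> g) (nu : R) :=
  forall x y : k, nu *: (pi (beta x) y + pi (beta y) x) = 0.

Definition ginv_mass (g k : lmodType R) (brg : g -> g -> g) (pi : g -> k -> k)
  (beta : k -> g) (kappa : R) :=
  forall (xi : g) (x : k), kappa *: beta (pi xi x) = kappa *: brg xi (beta x).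

Definition equiv_mass (g k : lmodType R) (brk : k -> k -> k) (pi : g -> k -> k)
  (beta : k -> g) (mu : R) :=
  forall x y z : k, mu *: pi (beta (brk x y)) z = mu *: brk (pi (beta x) y) z.

Definition ext_O_operator (g k : lmodType R) (brg : g -> g -> g) (brk : k -> k -> k)
  (pi : g -> k -> k) (r beta : k -> g) (lam nu kappa mu : R) : Prop :=
  [/\ antisym_mass pi beta nu, ginv_mass brg pi beta kappa, equiv_mass brk pi beta mu &
      forall x y : k,
        brg (r x) (r y) - r (pi (r x) y - pi (r y) x + lam *: brk x y)
        = kappa *: brg (beta x) (beta y) + mu *: beta (brk x y)].

Definition O_operator (g k : lmodType R) (brg : g -> g -> g) (brk : k -> k -> k)
  (pi : g -> k -> k) (T : k -> g) (lam : R) : Prop :=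
  forall x y : k, brg (T x) (T y) = T (pi (T x) y - pi (T y) x + lam *: brk x y).

Definition sgn (s : bool) : R := if s then 1 else -1.

Definition br_sign (g k : lmodType R) (brk : k -> k -> k) (pi : g -> k -> k)
  (beta : k -> g) (lam : R) (s : bool) (x y : k) : k :=
  lam *: brk x y + sgn s *: (2 *: pi (beta x) y).

End LieDefs.

(* Main.v *)
Require Import Defs.
From Stdlib Require Import FunctionalExtensionality.
From HB Require Import structures.
From mathcomp Require Import all_boot all_order all_algebra.
Import Order.TTheory GRing.Theory Num.Theory.
Set Implicit Arguments. Unset Strict Implicit.
Local Open Scope ring_scope.

Section Bil.
Variables (R : realFieldType) (U W : lmodType R) (Z : Type) (f : U -> Z -> W).
Hypothesis HL : forall a x y z, f (a *: x + y) z = a *: f x z + f y z.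
Lemma bl0 z : f 0 z = 0.
Proof.
have := HL 1 0 0 z; rewrite !scale1r addr0 => H.
by apply: (addrI (f 0 z)); rewrite addr0 -H.
Qed.
Lemma blD x y z : f (x + y) z = f x z + f y z.
Proof. by have := HL 1 x y z; rewrite !scale1r. Qed.
Lemma blZ a x z : f (a *: x) z = a *: f x z.
Proof. by have := HL a x 0 z; rewrite !addr0 bl0 addr0. Qed.
Lemma blN x z : f (- x) z = - f x z.
Proof. by rewrite -scaleN1r blZ scaleN1r. Qed.
Lemma blB x y z : f (x - y) z = f x z - f y z.
Proof. by rewrite blD blN. Qed.
End Bil.

Section LB.
Variables (R : realFieldType) (V : lmodType R) (br : V -> V -> V).
Hypothesis Hb : is_lie_bracket br.
Lemma lbL : forall a x y z, br (a *: x + y) z = a *: br x z + br y z.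
Proof. by case: Hb. Qed.
Lemma lbR : forall a x y z, br z (a *: x + y) = a *: br z x + br z y.
Proof. by case: Hb. Qed.
Lemma lbR' : forall a x y z, (fun u v => br v u) (a *: x + y) z
   = a *: (fun u v => br v u) x z + (fun u v => br v u) y z.
Proof. exact: lbR. Qed.
Lemma lbxx x : br x x = 0. Proof. by case: Hb. Qed.
Lemma lbJ x y z : br x (br y z) + br y (br z x) + br z (br x y) = 0.
Proof. by case: Hb. Qed.
Lemma lbDl x y z : br (x + y) z = br x z + br y z. Proof. exact: (@blD _ _ _ _ br lbL). Qed.
Lemma lbDr x y z : br z (x + y) = br z x + br z y. Proof. exact: (@blD _ _ _ _ (fun u v => br v u) lbR'). Qed.
Lemma lbZl a x z : br (a *: x) z = a *: br x z. Proof. exact: (@blZ _ _ _ _ br lbL). Qed.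
Lemma lbZr a x z : br z (a *: x) = a *: br z x. Proof. exact: (@blZ _ _ _ _ (fun u v => br v u) lbR'). Qed.
Lemma lbNl x z : br (- x) z = - br x z. Proof. exact: (@blN _ _ _ _ br lbL). Qed.
Lemma lbNr x z : br z (- x) = - br z x. Proof. exact: (@blN _ _ _ _ (fun u v => br v u) lbR'). Qed.
Lemma lbBl x y z : br (x - y) z = br x z - br y z. Proof. by rewrite lbDl lbNl. Qed.
Lemma lbBr x y z : br z (x - y) = br z x - br z y. Proof. by rewrite lbDr lbNr. Qed.
Lemma lbA x y : br y x = - br x y.
Proof.
have := lbxx (x + y); rewrite lbDl !lbDr !lbxx add0r addr0 => /eqP.
by rewrite addr_eq0 => /eqP ->; rewrite opprK.
Qed.
End LB.

Section Main.
Variables (R : realFieldType) (g k : lmodType R) (brg : g -> g -> g)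
  (brk : k -> k -> k) (pi : g -> k -> k) (beta : k -> g) (lam : R).
Hypothesis Hg : is_g_lie_algebra brg brk pi.
Hypotheses (bD : forall x y, beta (x + y) = beta x + beta y)
  (bZ : forall a x, beta (a *: x) = a *: beta x).
Hypothesis Hanti : forall x y, pi (beta y) x = - pi (beta x) y.
Hypothesis Hginv : forall xi x, beta (pi xi x) = brg xi (beta x).
Hypothesis Hequiv : forall x y z,
  lam *: pi (beta (brk x y)) z = lam *: brk (pi (beta x) y) z.

Lemma HgL : is_lie_bracket brg. Proof. by case: Hg. Qed.
Lemma HkL : is_lie_bracket brk. Proof. by case: Hg. Qed.
Lemma piL : forall a xi eta x, pi (a *: xi + eta) x = a *: pi xi x + pi eta x.
Proof. by case: Hg => _ _ []. Qed.
Lemma piR : forall a x y xi, pi xi (a *: x + y) = a *: pi xi x + pi xi y.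
Proof. by case: Hg => _ _ []. Qed.
Lemma piR' : forall a x y xi, (fun u v => pi v u) (a *: x + y) xi
   = a *: (fun u v => pi v u) x xi + (fun u v => pi v u) y xi.
Proof. exact: piR. Qed.
Lemma piDer xi x y : pi xi (brk x y) = brk (pi xi x) y + brk x (pi xi y).
Proof. by case: Hg. Qed.
Lemma piHom xi eta x : pi (brg xi eta) x = pi xi (pi eta x) - pi eta (pi xi x).
Proof. by case: Hg. Qed.
Lemma piDl xi eta x : pi (xi + eta) x = pi xi x + pi eta x.
Proof. exact: (@blD _ _ _ _ pi piL). Qed.
Lemma piBl xi eta x : pi (xi - eta) x = pi xi x - pi eta x.
Proof. exact: (@blB _ _ _ _ pi piL). Qed.
Lemma piDr xi x y : pi xi (x + y) = pi xi x + pi xi y.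
Proof. exact: (@blD _ _ _ _ (fun u v => pi v u) piR'). Qed.
Lemma piZr xi a x : pi xi (a *: x) = a *: pi xi x.
Proof. exact: (@blZ _ _ _ _ (fun u v => pi v u) piR'). Qed.
Lemma piNr xi x : pi xi (- x) = - pi xi x.
Proof. exact: (@blN _ _ _ _ (fun u v => pi v u) piR'). Qed.
Lemma pi0r xi : pi xi 0 = 0.
Proof. exact: (@bl0 _ _ _ _ (fun u v => pi v u) piR'). Qed.
Lemma bN x : beta (- x) = - beta x.
Proof. by rewrite -scaleN1r bZ scaleN1r. Qed.
Lemma bB x y : beta (x - y) = beta x - beta y.
Proof. by rewrite bD bN. Qed.

Lemma Bxx x : pi (beta x) x = 0.
Proof.
have H := Hanti x x.
have H2 : (2 : R) *: pi (beta x) x = 0 by rewrite scaler_nat mulr2n {1}H addNr.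
have := congr1 (fun w => (2 : R)^-1 *: w) H2.
by rewrite scalerA mulVf ?pnatr_eq0 // scale1r scaler0.
Qed.

Lemma L1 x y z : pi (beta x) (pi (beta y) z) + pi (beta y) (pi (beta z) x)
  + pi (beta z) (pi (beta x) y) = 0.
Proof.
have H := piHom (beta x) (beta y) z.
rewrite -Hginv in H.
rewrite (Hanti x z) piNr (Hanti (pi (beta x) y) z) H.
by rewrite opprB addrA subrK subrr.
Qed.

Lemma Zsum (V : zmodType) (a1 a2 a3 b1 b2 b3 : V) :
  (a1 + (b1 + - a2)) + (a2 + (b2 + - a3)) + (a3 + (b3 + - a1)) = b1 + b2 + b3.
Proof. by rewrite (addrCA a1) (addrCA a2) (addrCA a3) (addrACA b1) (addrA (a1 - a2)) subrK (addrACA (b1+b2)) (addrA (a1 - a3)) subrK subrr addr0. Qed.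

Lemma L2 x y z : lam *: ( (brk x (pi (beta y) z) + pi (beta x) (brk y z))
  + (brk y (pi (beta z) x) + pi (beta y) (brk z x))
  + (brk z (pi (beta x) y) + pi (beta z) (brk x y)) ) = 0.
Proof.
rewrite !piDer (Hanti z x) (Hanti x y) (Hanti y z) !(lbNr HkL).
rewrite Zsum.
have E1 : pi (beta (brk x y)) z = - pi (beta z) (brk x y) by rewrite Hanti.
have E : lam *: brk (pi (beta x) y) z
   = - (lam *: (brk (pi (beta y) z) x + brk (pi (beta z) x) y)).
  rewrite -Hequiv E1 piDer (Hanti y z) (lbNr HkL) (lbA HkL (pi (beta y) z) x).
  by rewrite opprK scalerN addrC.
by rewrite -addrA scalerDr E addNr.
Qed.

Lemma sum3 (V : lmodType R) (a b c : R) (p1 p2 p3 q1 q2 q3 r1 r2 r3 : V) :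
  (a *: p1 + b *: q1 + c *: r1) + (a *: p2 + b *: q2 + c *: r2)
  + (a *: p3 + b *: q3 + c *: r3)
  = a *: (p1 + p2 + p3) + b *: (q1 + q2 + q3) + c *: (r1 + r2 + r3).
Proof.
rewrite !scalerDr.
rewrite (addrACA (a *: p1 + b *: q1)) (addrACA (a *: p1)).
by rewrite (addrACA (a *: p1 + a *: p2 + (b *: q1 + b *: q2))) (addrACA (a *: p1 + a *: p2)).
Qed.

Section N.
Variable e : R.
Let N := fun u v => lam *: brk u v + e *: pi (beta u) v.

Lemma Nexp x y z : N x (N y z) = (lam * lam) *: brk x (brk y z)
  + (lam * e) *: (brk x (pi (beta y) z) + pi (beta x) (brk y z))
  + (e * e) *: pi (beta x) (pi (beta y) z).
Proof.
rewrite /N (lbDr HkL) !(lbZr HkL) piDr !piZr !scalerDr !scalerA.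
by rewrite [e * lam]mulrC !addrA.
Qed.

Lemma NJ x y z : N x (N y z) + N y (N z x) + N z (N x y) = 0.
Proof.
rewrite !Nexp sum3 (lbJ HkL) L1 !scaler0 addr0 add0r.
by rewrite [lam * e]mulrC -scalerA L2 scaler0.
Qed.

Lemma LieN : is_lie_bracket N.
Proof.
split.
- move=> a x y z; rewrite /N (lbL HkL) bD bZ piL.
  rewrite !scalerDr !scalerA [lam * a]mulrC [e * a]mulrC.
  by rewrite addrACA.
- move=> a x y z; rewrite /N (lbR HkL) piR.
  rewrite !scalerDr !scalerA [lam * a]mulrC [e * a]mulrC.
  by rewrite addrACA.
- by move=> x; rewrite /N (lbxx HkL) Bxx !scaler0 addr0.
- exact: NJ.
Qed.

Lemma DerN : is_g_lie_algebra brg N pi.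
Proof.
split.
- exact: HgL.
- exact: LieN.
- by split; [exact: piL | move=> *; exact: piR].
- move=> xi x y; rewrite /N piDr !piZr piDer.
  have -> : pi xi (pi (beta x) y) = pi (beta (pi xi x)) y + pi (beta x) (pi xi y).
    by rewrite Hginv piHom subrK.
  by rewrite !scalerDr addrACA.
- exact: piHom.
Qed.
End N.

Lemma part_i c :
  is_lie_bracket (fun x y => lam *: brk x y + c *: (2 *: pi (beta x) y)) /\
  is_g_lie_algebra brg (fun x y => lam *: brk x y + c *: (2 *: pi (beta x) y)) pi.
Proof.
have -> : (fun x y => lam *: brk x y + c *: (2 *: pi (beta x) y))
   = (fun x y => lam *: brk x y + (c * 2) *: pi (beta x) y).
  apply: FunctionalExtensionality.functional_extensionality => x.
  apply: FunctionalExtensionality.functional_extensionality => y.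
  by rewrite scalerA.
split; [exact: LieN | exact: DerN].
Qed.

Lemma Z1 (V : zmodType) (a b c l : V) : (a + b) - (c + - b) + (l + - (b + b)) = a - c + l.
Proof. by rewrite opprB (addrA (a+b) b) -(addrA a b b) (addrAC a (b+b)) addrACA subrr addr0. Qed.
Lemma Z2 (V : zmodType) (a b c l : V) : (a - b) - (c - - b) + (l + (b + b)) = a - c + l.
Proof. by rewrite opprK opprD (addrA (a-b) (-c)) (addrAC a) -(addrA (a - c)) -opprD addrACA addNr addr0. Qed.
Lemma Z3 (V : zmodType) (P Q S U rA L : V) :
  (P + Q + (S + U)) - (rA + (Q - - S + L)) = (P - rA) - (- U + L).
Proof. by rewrite opprK (addrA (P+Q) S U) -(addrA P Q S) (addrAC P (Q+S) U) (addrCA rA (Q+S) L) (opprD (Q+S)) addrA addrK opprD opprK addrACA opprD. Qed.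
Lemma Z4 (V : zmodType) (P Q S U rA L : V) :
  (P - Q - (S - U)) - (rA - (Q - - S + L)) = (P - rA) - (- U + - L).
Proof. by rewrite opprK !opprB (addrACA P) -opprD -(addrA (Q+S) L) (addrA (P + U - (Q+S))) subrK opprK (addrC L U) (addrACA P (-rA)) (addrC (-rA)). Qed.

Lemma Kp (r T : k -> g) (TE : forall z, T z = r z + beta z) x y :
 brg (T x) (T y) - T (pi (T x) y - pi (T y) x + 1 *: br_sign brk pi beta lam false x y)
 = (brg (r x) (r y) - r (pi (r x) y - pi (r y) x + lam *: brk x y))
   - ((-1) *: brg (beta x) (beta y) + (sgn R true * lam) *: beta (brk x y)).
Proof.
have -> : pi (T x) y - pi (T y) x + 1 *: br_sign brk pi beta lam false x y
   = pi (r x) y - pi (r y) x + lam *: brk x y.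
  rewrite /br_sign /sgn !TE !piDl (Hanti x y) scale1r scaleN1r scaler_nat mulr2n.
  exact: Z1.
rewrite !TE (lbDl HgL) !(lbDr HgL) !bD bN bZ !Hginv (lbA HgL (beta x) (r y)).
rewrite /sgn mul1r scaleN1r.
exact: Z3.
Qed.

Lemma Km (r T : k -> g) (TE : forall z, T z = r z - beta z) x y :
 brg (T x) (T y) - T (pi (T x) y - pi (T y) x + 1 *: br_sign brk pi beta lam true x y)
 = (brg (r x) (r y) - r (pi (r x) y - pi (r y) x + lam *: brk x y))
   - ((-1) *: brg (beta x) (beta y) + (sgn R false * lam) *: beta (brk x y)).
Proof.
have -> : pi (T x) y - pi (T y) x + 1 *: br_sign brk pi beta lam true x y
   = pi (r x) y - pi (r y) x + lam *: brk x y.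
  rewrite /br_sign /sgn !TE !piBl (Hanti x y) !scale1r scaler_nat mulr2n.
  exact: Z2.
rewrite !TE (lbBl HgL) !(lbBr HgL) bD bB bZ !Hginv (lbA HgL (beta x) (r y)).
rewrite /sgn mulN1r scaleN1r scaleNr.
exact: Z4.
Qed.

Lemma iff_gen (r T : k -> g) (nu mu : R) (bs : bool)
  (K : forall x y, brg (T x) (T y)
        - T (pi (T x) y - pi (T y) x + 1 *: br_sign brk pi beta lam bs x y)
      = (brg (r x) (r y) - r (pi (r x) y - pi (r y) x + lam *: brk x y))
        - ((-1) *: brg (beta x) (beta y) + mu *: beta (brk x y)))
  (Hmu : equiv_mass brk pi beta mu) :
  antisym_mass pi beta nu ->
  (ext_O_operator brg brk pi r beta lam nu (-1) mu
   <-> O_operator brg (br_sign brk pi beta lam bs) pi T 1).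
Proof.
move=> Ha; split.
- case=> _ _ _ H x y; apply/eqP; rewrite -subr_eq0 K H subrr //.
- move=> H; split => //.
  + by move=> xi x; rewrite Hginv.
  + move=> x y; apply/eqP; rewrite -subr_eq0 -K H subrr //.
Qed.

End Main.

Unset Implicit Arguments.

Theorem theorem2p15 (R : realFieldType) (g k : vectType R)
  (brg : g -> g -> g) (brk : k -> k -> k) (pi : g -> k -> k)
  (rp rm : {linear k -> g}) (lam nu kappa : R) :
  is_g_lie_algebra brg brk pi ->
  let r := fun x : k => 2^-1 *: (rp x + rm x) in
  let beta := fun x : k => 2^-1 *: (rp x - rm x) in
  nu != 0 -> kappa != 0 ->
  antisym_mass pi beta nu -> ginv_mass brg pi beta kappa -> equiv_mass brk pi beta lam ->
  (forall s : bool,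
     is_lie_bracket (br_sign brk pi beta lam s) /\
     is_g_lie_algebra brg (br_sign brk pi beta lam s) pi)
  /\
  (forall s : bool,
     ext_O_operator brg brk pi r beta lam nu (-1) (sgn R s * lam)
     <-> O_operator brg (br_sign brk pi beta lam (~~ s)) pi (if s then rp else rm) 1).
Proof.
move=> Hg r beta Hnu Hka Ha Hgi He.
have bD : forall x y, beta (x + y) = beta x + beta y.
  by move=> x y; rewrite /beta /= !linearD /= addrACA.
have bZ : forall a x, beta (a *: x) = a *: beta x.
  by move=> a x; rewrite /beta /= !linearZ /= [in RHS]scalerDr.
have Hanti : forall x y, pi (beta y) x = - pi (beta x) y.
  move=> x y; have := Ha x y; rewrite -(scaler0 _ nu) => /(scalerI Hnu) /eqP.
  by rewrite addr_eq0 => /eqP ->; rewrite opprK.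
have Hginv : forall xi x, beta (pi xi x) = brg xi (beta x).
  move=> xi x; exact: (scalerI Hka (Hgi xi x)).
have h2 : (2 : R) != 0 by rewrite pnatr_eq0.
have rpE : forall z, rp z = r z + beta z.
  move=> z; rewrite /r /beta -scalerDr (addrACA (rp z)) subrr addr0.
  by rewrite -mulr2n -scaler_nat scalerA mulVf // scale1r.
have rmE : forall z, rm z = r z - beta z.
  move=> z; rewrite /r /beta /= -scalerBr opprB (addrC (rp z)) addrACA subrr addr0.
  by rewrite -mulr2n -scaler_nat scalerA mulVf // scale1r.
split.
- move=> s; exact: (part_i Hg bD bZ Hanti Hginv He (sgn R s)).
- case.
  + apply: (iff_gen (lam := lam) Hginv _ _ Ha) => //.
    * move=> x y; exact: (Kp lam Hg bD bZ Hanti Hginv rpE).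
    * by move=> x y z; rewrite /sgn mul1r He.
  + apply: (iff_gen (lam := lam) Hginv _ _ Ha) => //.
    * move=> x y; exact: (Km lam Hg bD bZ Hanti Hginv rmE).
    * by move=> x y z; rewrite -!scalerA He.
Qed.
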